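(* A unital hom-associative algebra $(V,\star,\alpha,1)$ is of type $I_1$ if and only if it is of type $II$.
   Context: Let $k$ be a commutative ring. A unital hom-associative algebra is a tuple $(V,\star,\alpha,1)$ where $V$ is a $k$-module, $\star:V\times V\to V$ is $k$-bilinear, $\alpha:V\to V$ is $k$-linear, and $1\in V$ satisfies $1\star x=x\star 1=x$ for all $x\in V$. It is of type $T$ if the identity for $T$ holds for all $x,y,z\in V$: $I_1$: $\alpha(x)\star(y\star z)=(x\star y)\star\alpha(z)$; $II$: $x\star\alpha(y\star z)=\alpha(x\star y)\star z$. *)

(* Defs.v *)
From HB Require Import structures.
From mathcomp Require Import all_boot all_order all_algebra.
Set Implicit Arguments. Unset Strict Implicit. Unset Printing Implicit Defensive.
Import GRing.Theory.
Local Open Scope ring_scope.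

Definition unital_hom_alg (k : comPzRingType) (V : lmodType k)
  (star : V -> V -> V) (alpha : V -> V) (one : V) : Prop :=
  [/\ (forall y, linear (fun x => star x y)),
      (forall x, linear (star x)),
      linear alpha
    & forall x, star one x = x /\ star x one = x].

Definition type_I1 (k : comPzRingType) (V : lmodType k)
  (star : V -> V -> V) (alpha : V -> V) : Prop :=
  forall x y z, star (alpha x) (star y z) = star (star x y) (alpha z).

Definition type_II (k : comPzRingType) (V : lmodType k)
  (star : V -> V -> V) (alpha : V -> V) : Prop :=
  forall x y z, star x (alpha (star y z)) = star (alpha (star x y)) z.

(* Main.v *)
Require Import Defs.
From HB Require Import structures.
From mathcomp Require Import all_boot all_order all_algebra.

Theorem proposition2p4 (k : comPzRingType) (V : lmodType k)
  (star : V -> V -> V) (alpha : V -> V) (one : V) :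
  unital_hom_alg star alpha one ->
  (type_I1 star alpha <-> type_II star alpha).
Proof.
  case=> _ _ _ Hone.
  have L1 : type_I1 star alpha -> forall a b, star (alpha a) b = star a (alpha b).
    move=> H a b; have := H a one b.
    by rewrite (proj1 (Hone b)) (proj2 (Hone a)).
  have L2 : type_II star alpha -> forall a b, star (alpha a) b = star a (alpha b).
    move=> H a b; have := H a one b.
    by rewrite (proj1 (Hone b)) (proj2 (Hone a)) => ->.
  split=> H x y z.
  - by rewrite -(L1 H x) (L1 H (star x y)) H.
  - by rewrite (L2 H x) -(L2 H (star x y)) H.
Qed.
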